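(* Let $H$ be a finite-dimensional Hopf algebra over a field $k$, $R\subseteq H$ a Hopf subalgebra and $Q=H/R^+H$. If $Q$ is conditionally faithful, then $L_Q=\ell_Q$.
   Context: $R^+=\ker\varepsilon\cap R$; $Q^{\otimes n}$ is the $n$-fold tensor power of $Q$ in mod-$H$ (tensor over $k$, diagonal action $(m\otimes n)h=mh_{(1)}\otimes nh_{(2)}$). $\mathrm{Ann}\,M=\{h\in H:Mh=0\}$, and $\ell_Q$ is the least $n\ge1$ with $\mathrm{Ann}\,Q^{\otimes n}=\mathrm{Ann}\,Q^{\otimes m}$ for all $m\ge n$ (the stabilization point of the descending chain of annihilators). The trace ideal of a module $M_H$ is $\tau(M)=\{\sum_if_i(m_i):f_i\in\mathrm{Hom}(M_H,H_H),m_i\in M\}$; the chain $\tau(Q)\subseteq\tau(Q^{\otimes 2})\subseteq\cdots$ is ascending and $L_Q$ is the least $n\ge1$ with $\tau(Q^{\otimes n})=\tau(Q^{\otimes m})$ for all $m\ge n$. A module is conditionally faithful if one of its tensor powers is faithful. *)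

(* Defs.v *)
From HB Require Import structures.
From mathcomp Require Import all_boot all_algebra mxtens.
Set Implicit Arguments.
Unset Strict Implicit.
Unset Printing Implicit Defensive.
Import GRing.Theory.
Local Open Scope ring_scope.

Section Hopf.
Variables (F : fieldType) (n : nat).

(** The Hopf algebra H is the space 'rV[F]_n with basis e_i = bvec i,
    given by structure constants. *)
Definition bvec (i : 'I_n) : 'rV[F]_n := delta_mx 0 i.

Record hopf_data := HopfData {
  hmu : 'I_n -> 'I_n -> 'rV[F]_n;
  hone : 'rV[F]_n;
  hdelta : 'I_n -> 'M[F]_n;        (* Delta(e_i) = sum_{a,b} hdelta i a b  e_a (x) e_b *)
  heps : 'I_n -> F;
  hS : 'M[F]_n                     (* antipode: S(h) = h *m hS *)
}.

Variable H : hopf_data.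

Definition mulH (u v : 'rV[F]_n) : 'rV[F]_n :=
  \sum_(i < n) \sum_(j < n) (u 0 i * v 0 j) *: hmu H i j.
(* Delta(u) as a coefficient matrix: H (x) H = 'M_n, u (x) v <-> u^T *m v *)
Definition DeltaH (u : 'rV[F]_n) : 'M[F]_n := \sum_(i < n) u 0 i *: hdelta H i.
Definition epsH (u : 'rV[F]_n) : F := \sum_(i < n) u 0 i * heps H i.
Definition SH (u : 'rV[F]_n) : 'rV[F]_n := u *m hS H.

Definition is_hopf : Prop :=
      (forall u v w, mulH (mulH u v) w = mulH u (mulH v w)) /\
      (forall u, mulH (hone H) u = u /\ mulH u (hone H) = u) /\
      (* coassociativity: (Delta (x) id) Delta = (id (x) Delta) Delta *)
      (forall i a b c, \sum_(j < n) hdelta H i j c * hdelta H j a b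
                     = \sum_(j < n) hdelta H i a j * hdelta H j b c) /\
      ((forall i b, \sum_(a < n) hdelta H i a b * heps H a = (i == b)%:R)
      /\ (forall i a, \sum_(b < n) hdelta H i a b * heps H b = (i == a)%:R)) /\
      (* Delta and epsilon are algebra maps *)
      ((forall u v x y, DeltaH (mulH u v) x y =
          \sum_(a < n) \sum_(b < n) \sum_(c < n) \sum_(d < n)
             DeltaH u a b * DeltaH v c d * (hmu H a c) 0 x * (hmu H b d) 0 y)
      /\ DeltaH (hone H) = (hone H)^T *m hone H) /\
      ((forall u v, epsH (mulH u v) = epsH u * epsH v) /\ epsH (hone H) = 1) /\
      (* antipode: S(h_(1)) h_(2) = eps(h) 1 = h_(1) S(h_(2)) *)
      (forall u,
        \sum_(a < n) \sum_(b < n) DeltaH u a b *: mulH (SH (bvec a)) (bvec b)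
          = epsH u *: hone H
        /\ \sum_(a < n) \sum_(b < n) DeltaH u a b *: mulH (bvec a) (SH (bvec b))
          = epsH u *: hone H).

(** Subspaces of H are row spaces of square matrices (mxalgebra). *)
Definition is_hopf_subalg (R : 'M[F]_n) : Prop :=
  [/\ (hone H <= R)%MS,
      (forall u v, (u <= R)%MS -> (v <= R)%MS -> (mulH u v <= R)%MS),
      (* Delta(R) is contained in R (x) R = { R^T *m Y *m R } *)
      (forall u, (u <= R)%MS -> exists Y : 'M[F]_n, DeltaH u = R^T *m Y *m R) &
      (forall u, (u <= R)%MS -> (SH u <= R)%MS)].

(* matrix of right multiplication by h : v *m regmx h = v h *)
Definition regmx (h : 'rV[F]_n) : 'M[F]_n := \matrix_(i < n) mulH (bvec i) h.

Definition epscol : 'cV[F]_n := \col_(i < n) heps H i.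

Definition Rplus (R : 'M[F]_n) : 'M[F]_n := (R :&: kermx epscol)%MS.

Definition RplusH (R : 'M[F]_n) : 'M[F]_n :=
  (\sum_(j < n) (Rplus R *m regmx (bvec j)))%MS.

(** Finite-dimensional right H-modules: M = 'rV[F]_d, with
    m . h = m *m act M h. *)
Record hmod := HMod { mdim : nat; mrho : 'I_n -> 'M[F]_mdim }.

Definition act (M : hmod) (h : 'rV[F]_n) : 'M[F]_(mdim M) :=
  \sum_(i < n) h 0 i *: mrho M i.

(* quotient module H / I for a right ideal I (as factmod_mx in mxrepresentation) *)
Definition in_fact (I : 'M[F]_n) m (W : 'M[F]_(m, n)) :=
  W *m col_base (cokermx I).
Definition val_fact (I : 'M[F]_n) m (W : 'M[F]_(m, \rank (cokermx I))) :=
  W *m (row_base (cokermx I) *m row_ebase I).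
Definition factmod (I : 'M[F]_n) : hmod :=
  @HMod (\rank (cokermx I))
        (fun i => @in_fact I _ (@val_fact I _ 1%:M *m regmx (bvec i))).

Definition Qmod (R : 'M[F]_n) : hmod := factmod (RplusH R).

Definition trivmod : hmod := @HMod 1 (fun i => (heps H i)%:M).

Definition tensmod (M N : hmod) : hmod :=
  @HMod (mdim M * mdim N)
        (fun i => \sum_(a < n) \sum_(b < n) hdelta H i a b *: (mrho M a *t mrho N b)).

Fixpoint tpow (M : hmod) (m : nat) : hmod :=
  match m with
  | 0 => trivmod
  | m'.+1 => if m' is 0 then M else tensmod (tpow M m') M
  end.

Definition in_ann (M : hmod) (h : 'rV[F]_n) : bool := act M h == 0.

Definition faithful (M : hmod) : Prop := forall h, in_ann M h -> h = 0.

Definition cond_faithful (M : hmod) : Prop :=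
  exists m, (0 < m)%N /\ faithful (tpow M m).

(* module maps M_H -> H_H, as matrices: f(m) = m *m A *)
Definition is_hom (M : hmod) (A : 'M[F]_(mdim M, n)) : Prop :=
  forall h, act M h *m A = A *m regmx h.

Definition in_trace (M : hmod) (h : 'rV[F]_n) : Prop :=
  exists k (fs : 'I_k -> 'M[F]_(mdim M, n)) (ms : 'I_k -> 'rV[F]_(mdim M)),
    (forall i, @is_hom M (fs i)) /\ h = \sum_(i < k) ms i *m fs i.

Definition ann_stable (M : hmod) (l : nat) : Prop :=
  forall m, (l <= m)%N -> forall h, in_ann (tpow M l) h = in_ann (tpow M m) h.

Definition trace_stable (M : hmod) (l : nat) : Prop :=
  forall m, (l <= m)%N -> forall h, in_trace (tpow M l) h <-> in_trace (tpow M m) h.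

End Hopf.

Definition least_pos (P : nat -> Prop) (l : nat) : Prop :=
  [/\ (0 < l)%N, P l & forall l', (0 < l')%N -> P l' -> (l <= l')%N].

Definition is_ell F n (H : hopf_data F n) (M : hmod F n) l := least_pos (ann_stable H M) l.
Definition is_L F n (H : hopf_data F n) (M : hmod F n) l := least_pos (trace_stable H M) l.

(* Main.v *)
Require Import Defs.
From HB Require Import structures.
From mathcomp Require Import all_boot all_algebra mxtens.
From Stdlib Require Import Classical.
Set Implicit Arguments.
Unset Strict Implicit.
Unset Printing Implicit Defensive.
Import GRing.Theory.
Local Open Scope ring_scope.

Section K.
Variable F : fieldType.
Lemma sum_kronZ (V : lmodType F) m (i : 'I_m) (f : 'I_m -> V) :
  \sum_k (i == k)%:R *: f k = f i.
Proof.
rewrite (bigD1 i) //= eqxx scale1r big1 ?addr0 // => k.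
by rewrite eq_sym => /negbTE ->; rewrite scale0r.
Qed.
Lemma sum_kronZ' (V : lmodType F) m (i : 'I_m) (f : 'I_m -> V) :
  \sum_k (k == i)%:R *: f k = f i.
Proof. by rewrite -[RHS](sum_kronZ i); apply: eq_bigr => k _; rewrite eq_sym. Qed.
Lemma sum_kronM m (i : 'I_m) (f : 'I_m -> F) :
  \sum_k (i == k)%:R * f k = f i.
Proof. exact: (@sum_kronZ F^o). Qed.
Lemma sum_kronM' m (i : 'I_m) (f : 'I_m -> F) :
  \sum_k (k == i)%:R * f k = f i.
Proof. exact: (@sum_kronZ' F^o). Qed.
Lemma sum_kronMr m (i : 'I_m) (f : 'I_m -> F) :
  \sum_k f k * (i == k)%:R = f i.
Proof. by rewrite -[RHS](sum_kronM i); apply: eq_bigr => k _; rewrite mulrC. Qed.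
Lemma sum_kronMr' m (i : 'I_m) (f : 'I_m -> F) :
  \sum_k f k * (k == i)%:R = f i.
Proof. by rewrite -[RHS](sum_kronM' i); apply: eq_bigr => k _; rewrite mulrC. Qed.
End K.

Section Basics.
Variables (F : fieldType) (n : nat) (H : hopf_data F n).

Local Notation e := (@bvec F n).
Local Notation mu := (mulH H).

Definition lmx (g : 'rV[F]_n) : 'M[F]_n := \matrix_(i < n) mu g (e i).

Lemma bvecE i j : e i 0 j = (i == j)%:R.
Proof. by rewrite /bvec mxE eq_sym. Qed.

Lemma rowsumE (u : 'rV[F]_n) : u = \sum_i u 0 i *: e i.
Proof. exact: (row_sum_delta u). Qed.

Lemma mu_bvec i j : mu (e i) (e j) = hmu H i j.
Proof.
rewrite /mulH.
under eq_bigr => k _ do under eq_bigr => l _ do rewrite !bvecE -scalerA.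
under eq_bigr => k _ do rewrite -scaler_sumr sum_kronZ.
by rewrite sum_kronZ.
Qed.

Lemma mu_el i v : mu (e i) v = \sum_j v 0 j *: hmu H i j.
Proof.
rewrite /mulH.
under eq_bigr => k _ do under eq_bigr => l _ do rewrite !bvecE -scalerA.
under eq_bigr => k _ do rewrite -scaler_sumr.
by rewrite sum_kronZ.
Qed.

Lemma mu_er j u : mu u (e j) = \sum_i u 0 i *: hmu H i j.
Proof.
rewrite /mulH; apply: eq_bigr => i _.
under eq_bigr => l _ do rewrite !bvecE mulrC -scalerA.
by rewrite sum_kronZ.
Qed.

Lemma mu_expl u v : mu u v = \sum_i u 0 i *: mu (e i) v.
Proof.
under [RHS]eq_bigr => i _ do rewrite mu_el scaler_sumr.
rewrite /mulH; apply: eq_bigr => i _; apply: eq_bigr => j _.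
by rewrite scalerA.
Qed.

Lemma mu_expr u v : mu u v = \sum_j v 0 j *: mu u (e j).
Proof.
under [RHS]eq_bigr => j _ do rewrite mu_er scaler_sumr.
rewrite /mulH exchange_big; apply: eq_bigr => j _; apply: eq_bigr => i _.
by rewrite scalerA mulrC.
Qed.

Lemma mu_regmx u v : mu u v = u *m regmx H v.
Proof.
by rewrite mulmx_sum_row mu_expl; apply: eq_bigr => i _; rewrite rowK.
Qed.

Lemma mu_lmx u v : mu u v = v *m lmx u.
Proof.
by rewrite mulmx_sum_row mu_expr; apply: eq_bigr => i _; rewrite rowK.
Qed.

Lemma muDl u1 u2 v : mu (u1 + u2) v = mu u1 v + mu u2 v.
Proof. by rewrite !mu_regmx mulmxDl. Qed.
Lemma muZl a u v : mu (a *: u) v = a *: mu u v.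
Proof. by rewrite !mu_regmx scalemxAl. Qed.
Lemma muDr u v1 v2 : mu u (v1 + v2) = mu u v1 + mu u v2.
Proof. by rewrite !mu_lmx mulmxDl. Qed.
Lemma muZr a u v : mu u (a *: v) = a *: mu u v.
Proof. by rewrite !mu_lmx scalemxAl. Qed.
Lemma mu0l v : mu 0 v = 0.
Proof. by rewrite mu_regmx mul0mx. Qed.
Lemma mu0r u : mu u 0 = 0.
Proof. by rewrite mu_lmx mul0mx. Qed.
Lemma mu_suml I r (P : pred I) (f : I -> 'rV_n) v :
  mu (\sum_(i <- r | P i) f i) v = \sum_(i <- r | P i) mu (f i) v.
Proof. by rewrite mu_regmx mulmx_suml; apply: eq_bigr => i _; rewrite mu_regmx. Qed.
Lemma mu_sumr I r (P : pred I) (f : I -> 'rV_n) u :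
  mu u (\sum_(i <- r | P i) f i) = \sum_(i <- r | P i) mu u (f i).
Proof. by rewrite mu_lmx mulmx_suml; apply: eq_bigr => i _; rewrite mu_lmx. Qed.

Lemma DeltaE u a b : DeltaH H u a b = \sum_i u 0 i * hdelta H i a b.
Proof. by rewrite /DeltaH summxE; apply: eq_bigr => i _; rewrite mxE. Qed.

Lemma Delta_bvec i : DeltaH H (e i) = hdelta H i.
Proof.
apply/matrixP => a b; rewrite DeltaE.
by rewrite (eq_bigr (fun k => (i == k)%:R * hdelta H k a b)) ?sum_kronM // => k _; rewrite bvecE.
Qed.

Lemma DeltaD u v : DeltaH H (u + v) = DeltaH H u + DeltaH H v.
Proof.
by rewrite /DeltaH -big_split; apply: eq_bigr => i _; rewrite mxE scalerDl.
Qed.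
Lemma DeltaZ a u : DeltaH H (a *: u) = a *: DeltaH H u.
Proof.
by rewrite /DeltaH scaler_sumr; apply: eq_bigr => i _; rewrite mxE scalerA.
Qed.
Lemma Delta_sum I r (P : pred I) (f : I -> 'rV_n) :
  DeltaH H (\sum_(i <- r | P i) f i) = \sum_(i <- r | P i) DeltaH H (f i).
Proof.
apply: (big_morph _ DeltaD); rewrite /DeltaH big1 // => i _.
by rewrite mxE scale0r.
Qed.

Lemma epsE u : epsH H u = (u *m epscol H) 0 0.
Proof. by rewrite /epsH mxE; apply: eq_bigr => i _; rewrite mxE. Qed.
Lemma eps_bvec i : epsH H (e i) = heps H i.
Proof.
rewrite /epsH (eq_bigr (fun k => (i == k)%:R * heps H k)) ?sum_kronM // => k _.
by rewrite bvecE.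
Qed.

End Basics.

Section Sw.
Variables (F : fieldType) (n : nat) (H : hopf_data F n).
Local Notation e := (@bvec F n).
Local Notation mu := (mulH H).

Definition sw p q (u : 'rV[F]_n) (G : 'I_n -> 'I_n -> 'M[F]_(p,q)) : 'M[F]_(p,q) :=
  \sum_a \sum_b DeltaH H u a b *: G a b.

Definition bl p q (G : 'I_n -> 'I_n -> 'M[F]_(p,q)) (x w : 'rV[F]_n) : 'M[F]_(p,q) :=
  \sum_s \sum_t (x 0 s * w 0 t) *: G s t.

Variables p q : nat.
Implicit Types (G : 'I_n -> 'I_n -> 'M[F]_(p,q)).

Lemma eq_sw u G1 G2 : (forall a b, G1 a b = G2 a b) -> sw u G1 = sw u G2.
Proof. by move=> E; apply: eq_bigr => a _; apply: eq_bigr => b _; rewrite E. Qed.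

Lemma sw_sum m u (G : 'I_m -> 'I_n -> 'I_n -> 'M[F]_(p,q)) :
  sw u (fun a b => \sum_k G k a b) = \sum_k sw u (G k).
Proof.
rewrite /sw; symmetry; rewrite exchange_big; apply: eq_bigr => a _.
rewrite exchange_big; apply: eq_bigr => b _.
by rewrite scaler_sumr.
Qed.

Lemma sw_Z u c G : sw u (fun a b => c *: G a b) = c *: sw u G.
Proof.
rewrite /sw scaler_sumr; apply: eq_bigr => a _; rewrite scaler_sumr.
by apply: eq_bigr => b _; rewrite !scalerA mulrC.
Qed.

Lemma sw_mulmxr r u G (A : 'M[F]_(q, r)) :
  sw u G *m A = sw u (fun a b => G a b *m A).
Proof.
rewrite /sw mulmx_suml; apply: eq_bigr => a _; rewrite mulmx_suml.
by apply: eq_bigr => b _; rewrite scalemxAl.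
Qed.

Lemma sw_mulmxl r u G (A : 'M[F]_(r, p)) :
  A *m sw u G = sw u (fun a b => A *m G a b).
Proof.
rewrite /sw mulmx_sumr; apply: eq_bigr => a _; rewrite mulmx_sumr.
by apply: eq_bigr => b _; rewrite scalemxAr.
Qed.

Lemma sw_entry u G i j : sw u G i j = \sum_a \sum_b DeltaH H u a b * G a b i j.
Proof.
rewrite /sw summxE; apply: eq_bigr => a _; rewrite summxE.
by apply: eq_bigr => b _; rewrite mxE.
Qed.

Lemma sw_pair u G : sw u G = \sum_(ab : 'I_n * 'I_n) DeltaH H u ab.1 ab.2 *: G ab.1 ab.2.
Proof. by rewrite /sw pair_bigA. Qed.

Lemma sw_exch u v (G : 'I_n -> 'I_n -> 'I_n -> 'I_n -> 'M[F]_(p,q)) :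
  sw u (fun a b => sw v (G a b)) = sw v (fun c d => sw u (fun a b => G a b c d)).
Proof.
rewrite sw_pair [RHS]sw_pair.
under eq_bigr => ab _ do rewrite sw_pair scaler_sumr.
under [RHS]eq_bigr => cd _ do rewrite sw_pair scaler_sumr.
rewrite exchange_big; apply: eq_bigr => cd _; apply: eq_bigr => ab _.
by rewrite !scalerA mulrC.
Qed.



Lemma sw_D u v G : sw (u + v) G = sw u G + sw v G.
Proof.
rewrite /sw -big_split; apply: eq_bigr => a _; rewrite -big_split.
by apply: eq_bigr => b _; rewrite DeltaD mxE scalerDl.
Qed.

Lemma sw_scale c u G : sw (c *: u) G = c *: sw u G.
Proof.
rewrite /sw scaler_sumr; apply: eq_bigr => a _; rewrite scaler_sumr.
by apply: eq_bigr => b _; rewrite DeltaZ mxE scalerA.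
Qed.

Lemma sw_expand u G : sw u G = \sum_i u 0 i *: sw (e i) G.
Proof.
rewrite {1}(rowsumE u).
elim/big_rec2: _ => [|i x y _ IH]; last by rewrite sw_D sw_scale IH.
by rewrite /sw big1 // => a _; rewrite big1 // => b _; rewrite DeltaE big1 ?scale0r // => i _; rewrite mxE mul0r.
Qed.

Lemma sw_bvec i G : sw (e i) G = \sum_a \sum_b hdelta H i a b *: G a b.
Proof. by rewrite /sw Delta_bvec. Qed.

Lemma bl_e G s t : bl G (e s) (e t) = G s t.
Proof.
rewrite /bl.
under eq_bigr => s' _ do under eq_bigr => t' _ do rewrite !bvecE -scalerA.
under eq_bigr => s' _ do rewrite -scaler_sumr sum_kronZ.
by rewrite sum_kronZ.
Qed.

End Sw.

Lemma sum_swap4 (V : nmodType) m (f : 'I_m -> 'I_m -> 'I_m -> 'I_m -> V) :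
  \sum_a \sum_b \sum_c \sum_d f a b c d = \sum_c \sum_d \sum_a \sum_b f a b c d.
Proof.
under eq_bigr => a _ do under eq_bigr => b _ do rewrite pair_bigA.
rewrite pair_bigA.
under [RHS]eq_bigr => a _ do under eq_bigr => b _ do rewrite pair_bigA.
rewrite [RHS]pair_bigA.
by rewrite exchange_big.
Qed.

Lemma sum_swap6 (V : nmodType) m (f : 'I_m -> 'I_m -> 'I_m -> 'I_m -> 'I_m -> 'I_m -> V) :
  \sum_x \sum_y \sum_a \sum_b \sum_c \sum_d f x y a b c d =
  \sum_a \sum_b \sum_c \sum_d \sum_x \sum_y f x y a b c d.
Proof.
under eq_bigr => x _ do under eq_bigr => y _ do under eq_bigr => a _ do
  under eq_bigr => b _ do rewrite pair_bigA.
under eq_bigr => x _ do under eq_bigr => y _ do rewrite pair_bigA.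
rewrite pair_bigA.
under [RHS]eq_bigr => x _ do under eq_bigr => y _ do under eq_bigr => a _ do
  under eq_bigr => b _ do rewrite pair_bigA.
under [RHS]eq_bigr => x _ do under eq_bigr => y _ do rewrite pair_bigA.
rewrite [RHS]pair_bigA.
rewrite exchange_big; apply: eq_bigr => ab _.
exact: exchange_big.
Qed.

Section Hopf.
Variables (F : fieldType) (n : nat) (H : hopf_data F n).
Hypothesis hH : is_hopf H.
Local Notation e := (@bvec F n).
Local Notation mu := (mulH H).
Local Notation dl := (hdelta H).
Local Notation ep := (heps H).

Lemma assoc u v w : mu (mu u v) w = mu u (mu v w).
Proof. by case: hH. Qed.
Lemma unitl u : mu (hone H) u = u.
Proof. by case: hH => _ [h _]; case: (h u). Qed.
Lemma unitr u : mu u (hone H) = u.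
Proof. by case: hH => _ [h _]; case: (h u). Qed.
Lemma coassoc i a b c :
  \sum_j dl i j c * dl j a b = \sum_j dl i a j * dl j b c.
Proof. by case: hH => _ [_ [h _]]; apply: h. Qed.
Lemma counitL i b : \sum_a dl i a b * ep a = (i == b)%:R.
Proof. by case: hH => _ [_ [_ [[h _] _]]]; apply: h. Qed.
Lemma counitR i a : \sum_b dl i a b * ep b = (i == a)%:R.
Proof. by case: hH => _ [_ [_ [[_ h] _]]]; apply: h. Qed.
Lemma Dmul u v x y : DeltaH H (mu u v) x y =
  \sum_a \sum_b \sum_c \sum_d
     DeltaH H u a b * DeltaH H v c d * (hmu H a c) 0 x * (hmu H b d) 0 y.
Proof. by case: hH => _ [_ [_ [_ [[h _] _]]]]; apply: h. Qed.
Lemma D1 : DeltaH H (hone H) = (hone H)^T *m hone H.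
Proof. by case: hH => _ [_ [_ [_ [[_ h] _]]]]. Qed.
Lemma epsM u v : epsH H (mu u v) = epsH H u * epsH H v.
Proof. by case: hH => _ [_ [_ [_ [_ [[h _] _]]]]]. Qed.
Lemma eps1 : epsH H (hone H) = 1.
Proof. by case: hH => _ [_ [_ [_ [_ [[_ h] _]]]]]. Qed.
Lemma antiL u : \sum_a \sum_b DeltaH H u a b *: mu (SH H (e a)) (e b) = epsH H u *: hone H.
Proof. by case: hH => _ [_ [_ [_ [_ [_ h]]]]]; case: (h u). Qed.
Lemma antiR u : \sum_a \sum_b DeltaH H u a b *: mu (e a) (SH H (e b)) = epsH H u *: hone H.
Proof. by case: hH => _ [_ [_ [_ [_ [_ h]]]]]; case: (h u). Qed.

Variables p q : nat.
Implicit Types (G : 'I_n -> 'I_n -> 'M[F]_(p,q)).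

Lemma sw_coassoc u (G : 'I_n -> 'I_n -> 'I_n -> 'M[F]_(p,q)) :
  sw H u (fun a b => sw H (e a) (fun c d => G c d b)) =
  sw H u (fun c a => sw H (e a) (fun d b => G c d b)).
Proof.
rewrite sw_expand [RHS]sw_expand; apply: eq_bigr => i _; congr (_ *: _).
rewrite !sw_bvec.
under eq_bigr => a _ do under eq_bigr => b _ do rewrite sw_bvec scaler_sumr.
under eq_bigr => a _ do under eq_bigr => b _ do under eq_bigr => c _ do
  (rewrite scaler_sumr; under eq_bigr => d _ do rewrite scalerA).
under [RHS]eq_bigr => a _ do under eq_bigr => b _ do rewrite sw_bvec scaler_sumr.
under [RHS]eq_bigr => a _ do under eq_bigr => b _ do under eq_bigr => c _ do
  (rewrite scaler_sumr; under eq_bigr => d _ do rewrite scalerA).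
transitivity (\sum_c \sum_d \sum_b \sum_a (dl i a b * dl a c d) *: G c d b).
  rewrite sum_swap4; apply: eq_bigr => c _; apply: eq_bigr => d _.
  exact: exchange_big.
transitivity (\sum_c \sum_d \sum_b \sum_a (dl i c a * dl a d b) *: G c d b).
  apply: eq_bigr => c _; apply: eq_bigr => d _; apply: eq_bigr => b _.
  by rewrite -!scaler_suml coassoc.
apply: eq_bigr => c _; symmetry; rewrite exchange_big; apply: eq_bigr => d _.
exact: exchange_big.
Qed.

Lemma sw_counitL u (G : 'I_n -> 'M[F]_(p,q)) :
  sw H u (fun a b => ep a *: G b) = \sum_b u 0 b *: G b.
Proof.
rewrite sw_expand; apply: eq_bigr => i _; congr (_ *: _).
rewrite sw_bvec exchange_big /=.
under eq_bigr => b _ do under eq_bigr => a _ do rewrite scalerA.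
under eq_bigr => b _ do rewrite -scaler_suml counitL.
by rewrite sum_kronZ.
Qed.

Lemma sw_counitR u (G : 'I_n -> 'M[F]_(p,q)) :
  sw H u (fun a b => ep b *: G a) = \sum_a u 0 a *: G a.
Proof.
rewrite sw_expand; apply: eq_bigr => i _; congr (_ *: _).
rewrite sw_bvec /=.
under eq_bigr => a _ do under eq_bigr => b _ do rewrite scalerA.
under eq_bigr => a _ do rewrite -scaler_suml counitR.
by rewrite sum_kronZ.
Qed.

Lemma sw_mul u v G : sw H (mu u v) G =
  sw H u (fun a b => sw H v (fun c d => bl G (hmu H a c) (hmu H b d))).
Proof.
rewrite /sw /bl.
under eq_bigr => x _ do under eq_bigr => y _ do rewrite Dmul scaler_suml.
under eq_bigr => x _ do under eq_bigr => y _ do under eq_bigr => a _ do rewrite scaler_suml.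
under eq_bigr => x _ do under eq_bigr => y _ do under eq_bigr => a _ do
  under eq_bigr => b _ do rewrite scaler_suml.
under eq_bigr => x _ do under eq_bigr => y _ do under eq_bigr => a _ do
  under eq_bigr => b _ do under eq_bigr => c _ do rewrite scaler_suml.
rewrite sum_swap6; apply: eq_bigr => a _; apply: eq_bigr => b _.
rewrite scaler_sumr; apply: eq_bigr => c _.
rewrite scaler_sumr; apply: eq_bigr => d _.
rewrite scalerA scaler_sumr; apply: eq_bigr => x _.
rewrite scaler_sumr; apply: eq_bigr => y _.
by rewrite !scalerA !mulrA.
Qed.

Lemma sw_antiR u : sw H u (fun a b => mu (e a) (SH H (e b))) = epsH H u *: hone H.
Proof. exact: antiR. Qed.
Lemma sw_antiL u : sw H u (fun a b => mu (SH H (e a)) (e b)) = epsH H u *: hone H.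
Proof. exact: antiL. Qed.

End Hopf.

Section Xi.
Variables (F : fieldType) (n : nat) (H : hopf_data F n).
Hypothesis hH : is_hopf H.
Local Notation e := (@bvec F n).
Local Notation mu := (mulH H).
Local Notation dl := (hdelta H).
Local Notation ep := (heps H).
Local Notation S := (SH H).

Lemma sw_mull u (G : 'I_n -> 'I_n -> 'rV[F]_n) v :
  mu (sw H u G) v = sw H u (fun a b => mu (G a b) v).
Proof. by rewrite mu_regmx sw_mulmxr; apply: eq_sw => a b; rewrite mu_regmx. Qed.

Lemma sw_mulr u (G : 'I_n -> 'I_n -> 'rV[F]_n) v :
  mu v (sw H u G) = sw H u (fun a b => mu v (G a b)).
Proof. by rewrite mu_lmx sw_mulmxr; apply: eq_sw => a b; rewrite mu_lmx. Qed.

Lemma sw_coef p q u (X : 'I_n -> 'I_n -> 'rV[F]_n) k (V : 'M[F]_(p,q)) :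
  sw H u (fun a b => (X a b) 0 k *: V) = (sw H u X) 0 k *: V.
Proof.
rewrite sw_entry /sw scaler_suml; apply: eq_bigr => a _.
by rewrite scaler_suml; apply: eq_bigr => b _; rewrite scalerA.
Qed.

Lemma mu_e_hmu a y : mu (e a) y = \sum_c y 0 c *: hmu H a c.
Proof. by rewrite mu_expr; apply: eq_bigr => c _; rewrite mu_bvec. Qed.

Definition Xi (Z : 'M[F]_n) : 'M[F]_n :=
  \matrix_(i < n) \sum_k sw H (mu (e k) (e i)) (fun a b => Z a k *: e b).

Lemma I1 Z y :
  sw H y (fun p q => mu (row p (Xi Z)) (S (e q))) =
  \sum_k sw H (e k) (fun a b => (mu (e a) y *m Z) 0 k *: e b).
Proof.
rewrite /Xi. under eq_sw => p q do rewrite rowK.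
under eq_sw => p q do rewrite mu_suml.
under eq_sw => p q do under eq_bigr => k _ do rewrite sw_mull.
under eq_sw => p q do under eq_bigr => k _ do rewrite sw_mul //.
rewrite sw_sum; apply: eq_bigr => k _.
rewrite sw_exch; apply: eq_sw => a b.
transitivity (sw H y (fun p q => sw H (e p) (fun c d =>
   (hmu H a c *m Z) 0 k *: mu (hmu H b d) (S (e q))))).
  apply: eq_sw => p q; apply: eq_sw => c d.
  rewrite /bl.
  under eq_bigr => s _ do under eq_bigr => t _ do rewrite muZl scalerA.
  rewrite mxE scaler_suml (mu_expl H (hmu H b d)).
  apply: eq_bigr => s _; rewrite scaler_sumr; apply: eq_bigr => t _.
  rewrite !scalerA; congr (_ *: _).
  by rewrite -!mulrA [Z s k * _]mulrC.
rewrite sw_coassoc //.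
transitivity (sw H y (fun c p => ep p *: ((hmu H a c *m Z) 0 k *: e b))).
  apply: eq_sw => c p; rewrite sw_Z [in RHS]scalerA [in RHS]mulrC -[in RHS]scalerA.
  congr (_ *: _).
  under eq_sw => d q do rewrite -mu_bvec assoc //.
  by rewrite -sw_mulr sw_antiR // muZr unitr // eps_bvec.
rewrite sw_counitR // mu_e_hmu mulmx_suml summxE scaler_suml.
by apply: eq_bigr => c _; rewrite scalerA -scalemxAl [in RHS]mxE.
Qed.

Lemma Rentry Z z j :
  (\sum_k sw H (e k) (fun a b => (mu (e a) z *m Z) 0 k *: e b)) 0 j =
  \sum_k \sum_a dl k a j * (mu (e a) z *m Z) 0 k.
Proof.
rewrite summxE; apply: eq_bigr => k _; rewrite sw_entry Delta_bvec.
apply: eq_bigr => a _.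
under eq_bigr => b _ do rewrite mxE bvecE mulrA.
by rewrite sum_kronMr'.
Qed.

Lemma sw_sumZ p q m1 m2 u (f : 'I_m1 -> 'I_m2 -> F)
   (g : 'I_m1 -> 'I_m2 -> 'I_n -> 'I_n -> 'M[F]_(p,q)) :
  sw H u (fun c b => \sum_k \sum_a f k a *: g k a c b) =
  \sum_k \sum_a f k a *: sw H u (g k a).
Proof.
rewrite sw_sum; apply: eq_bigr => k _; rewrite sw_sum; apply: eq_bigr => a _.
by rewrite sw_Z.
Qed.

Lemma I2key Z y :
  \sum_j sw H (e j) (fun c b =>
     (\sum_k sw H (e k) (fun a b' => (mu (e a) (mu (S (e c)) y) *m Z) 0 k *: e b')) 0 j
      *: e b) = y *m Z.
Proof.
pose X a c k := (mu (e a) (mu (S (e c)) y) *m Z) 0 k.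
transitivity (\sum_j \sum_k \sum_a dl k a j *: sw H (e j) (fun c b => X a c k *: e b)).
  apply: eq_bigr => j _.
  transitivity (sw H (e j) (fun c b => \sum_k \sum_a dl k a j *: (X a c k *: e b)));
    last exact: sw_sumZ.
  apply: eq_sw => c b.
  rewrite Rentry scaler_suml; apply: eq_bigr => k _; rewrite scaler_suml.
  by apply: eq_bigr => a _; rewrite scalerA.
transitivity (\sum_k sw H (e k) (fun a j => sw H (e j) (fun c b => X a c k *: e b))).
  rewrite exchange_big; apply: eq_bigr => k _; rewrite sw_bvec.
  by rewrite exchange_big.
transitivity (\sum_k sw H (e k) (fun j b => ep j *: ((y *m Z) 0 k *: e b))).
  apply: eq_bigr => k _.
  rewrite -(sw_coassoc hH (e k) (fun a c b => X a c k *: e b)); apply: eq_sw => j b.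
  rewrite /X sw_coef.
  transitivity ((sw H (e j) (fun a c => mu (mu (e a) (S (e c))) y *m Z)) 0 k *: e b).
    have E : sw H (e j) (fun a c => mu (e a) (mu (S (e c)) y) *m Z) =
             sw H (e j) (fun a c => mu (mu (e a) (S (e c))) y *m Z).
      by apply: eq_sw => a c; rewrite assoc.
    by rewrite E.
  rewrite -sw_mulmxr -sw_mull sw_antiR // muZl unitl // eps_bvec.
  by rewrite -scalemxAl mxE scalerA.
transitivity (\sum_k \sum_b ((y *m Z) 0 k * (k == b)%:R) *: e b).
  apply: eq_bigr => k _; rewrite sw_counitL //.
  by apply: eq_bigr => b _; rewrite bvecE scalerA mulrC.
rewrite [RHS]rowsumE; apply: eq_bigr => k _.
rewrite -(sum_kronZ k (fun b => (y *m Z) 0 k *: e b)); apply: eq_bigr => b _.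
by rewrite scalerA mulrC.
Qed.
Lemma Xi_inj Z : Xi Z = 0 -> Z = 0.
Proof.
move=> XZ.
have R0 y : \sum_k sw H (e k) (fun a b => (mu (e a) y *m Z) 0 k *: e b) = 0.
  rewrite -I1 /sw big1 // => p _; rewrite big1 // => q _.
  by rewrite XZ row0 mu0l scaler0.
apply/row_matrixP => i; rewrite row0 rowE -/(e i) -I2key.
by apply: big1 => j _; rewrite /sw big1 // => c _; rewrite big1 // => b _; rewrite R0 mxE scale0r scaler0.
Qed.

End Xi.

Lemma lin_matrix (F : fieldType) m k (L : 'rV[F]_m -> 'rV[F]_k)
  (HL : forall a u v, L (a *: u + v) = a *: L u + L v) u :
  u *m \matrix_(r < m) L (delta_mx 0 r) = L u.
Proof.
have L0 : L 0 = 0.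
  have := HL 1 0 0; rewrite !scale1r addr0 => E.
  by apply: (addrI (L 0)); rewrite addr0 -E.
have LD : {morph L : x y / x + y}.
  by move=> x y; have := HL 1 x y; rewrite !scale1r.
have LZ a x : L (a *: x) = a *: L x by rewrite -[a *: x]addr0 HL L0 addr0.
rewrite mulmx_sum_row {2}(row_sum_delta u) (big_morph L LD L0).
by apply: eq_bigr => r _; rewrite rowK LZ.
Qed.

Section Omega.
Variables (F : fieldType) (n : nat) (H : hopf_data F n).
Hypothesis hH : is_hopf H.
Local Notation e := (@bvec F n).
Local Notation mu := (mulH H).
Local Notation ep := (heps H).

Lemma sw_add p q u (G1 G2 : 'I_n -> 'I_n -> 'M[F]_(p,q)) :
  sw H u (fun a b => G1 a b + G2 a b) = sw H u G1 + sw H u G2.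
Proof.
rewrite /sw -big_split; apply: eq_bigr => a _; rewrite -big_split.
by apply: eq_bigr => b _; rewrite scalerDr.
Qed.

Lemma sw_lin p q m (c : 'I_m -> F) (v : 'I_m -> 'rV[F]_n) (G : 'I_n -> 'I_n -> 'M[F]_(p,q)) :
  sw H (\sum_l c l *: v l) G = \sum_l c l *: sw H (v l) G.
Proof.
elim/big_rec2: _ => [|l x y _ IH]; last by rewrite sw_D sw_scale IH.
by rewrite /sw big1 // => a _; rewrite big1 // => b _; rewrite DeltaE big1 ?scale0r // => i _; rewrite mxE mul0r.
Qed.

Lemma XiL a Z1 Z2 : Xi H (a *: Z1 + Z2) = a *: Xi H Z1 + Xi H Z2.
Proof.
apply/row_matrixP => i; rewrite linearD linearZ /= !rowK.
transitivity (\sum_k (a *: sw H (mu (e k) (e i)) (fun x b => Z1 x k *: e b) +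
                      sw H (mu (e k) (e i)) (fun x b => Z2 x k *: e b))).
  apply: eq_bigr => k _; rewrite -sw_Z -sw_add; apply: eq_sw => x b.
  by rewrite !mxE scalerDl scalerA.
by rewrite big_split /= -scaler_sumr.
Qed.

Lemma Xi_mod g Z : lmx H g *m Xi H Z = Xi H (Z *m regmx H g).
Proof.
apply/row_matrixP => i; rewrite row_mul !rowK mulmx_sum_row.
transitivity (\sum_k sw H (mu (e k) (mu g (e i))) (fun a b => Z a k *: e b)).
  under eq_bigr => l _ do rewrite rowK scaler_sumr.
  rewrite exchange_big; apply: eq_bigr => k _.
  rewrite -sw_lin; congr (sw H _ _).
  rewrite [in RHS](rowsumE (mu g (e i))) mu_sumr; apply: eq_bigr => l _.
  by rewrite muZr.
transitivity (\sum_m sw H (mu (mu (e m) g) (e i)) (fun a b => Z a m *: e b)).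
  by apply: eq_bigr => k _; rewrite assoc.
transitivity (\sum_m \sum_k (mu (e m) g) 0 k *: sw H (mu (e k) (e i)) (fun a b => Z a m *: e b)).
  apply: eq_bigr => m _; rewrite -sw_lin; congr (sw H _ _).
  rewrite {1}(rowsumE (mu (e m) g)) mu_suml; apply: eq_bigr => k _.
  by rewrite muZl.
rewrite exchange_big; apply: eq_bigr => k _.
transitivity (sw H (mu (e k) (e i)) (fun a b => \sum_m (mu (e m) g) 0 k *: (Z a m *: e b))).
  by rewrite sw_sum; apply: eq_bigr => m _; rewrite sw_Z.
apply: eq_sw => a b; rewrite [in RHS]mxE scaler_suml; apply: eq_bigr => m _.
by rewrite scalerA mulrC /regmx mxE.
Qed.

Lemma Xi_one : Xi H (epscol H *m hone H) = 1%:M.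
Proof.
apply/row_matrixP => i; rewrite rowK row1.
transitivity (sw H (mu (hone H) (e i)) (fun a b => ep a *: e b)).
  rewrite [in RHS](mu_expl H (hone H)) sw_lin; apply: eq_bigr => k _.
  rewrite -sw_Z; apply: eq_sw => a b.
  by rewrite !mxE big_ord1 !mxE scalerA mulrC.
rewrite unitl // sw_counitL //.
by symmetry; exact: (rowsumE (e i)).
Qed.

Definition XiV (v : 'rV[F]_(n * n)) : 'rV[F]_(n * n) := mxvec (Xi H (vec_mx v)).
Definition XiA : 'M[F]_(n * n) := \matrix_(r < n * n) XiV (delta_mx 0 r).

Lemma XiA_mul Z : mxvec Z *m XiA = mxvec (Xi H Z).
Proof.
rewrite lin_matrix /XiV ?mxvecK // => a u v.
by rewrite linearD linearZ /= XiL linearD linearZ.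
Qed.

Lemma mxvec_inj p q : injective (@mxvec F p q).
Proof. exact: (can_inj mxvecK). Qed.

Lemma XiA_unit : XiA \in unitmx.
Proof.
rewrite -row_free_unit -kermx_eq0; apply/eqP/row_matrixP => r.
set w := row r (kermx XiA).
have w0 : w *m XiA = 0 by rewrite /w -row_mul mulmx_ker row0.
rewrite row0; move: w0; rewrite -{1}[w]vec_mxK XiA_mul.
rewrite -(linear0 (@mxvec F n n)) => /mxvec_inj /(Xi_inj hH) w0.
rewrite linear0; apply: (can_inj vec_mxK); by rewrite w0 linear0.
Qed.

Definition Omega (Phi : 'M[F]_n) : 'M[F]_n := vec_mx (mxvec Phi *m invmx XiA).

Lemma XiOmega Phi : Xi H (Omega Phi) = Phi.
Proof.
apply: mxvec_inj; rewrite -XiA_mul /Omega vec_mxK -mulmxA mulVmx ?mulmx1 //.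
exact: XiA_unit.
Qed.

Lemma OmegaXi Z : Omega (Xi H Z) = Z.
Proof.
by rewrite /Omega -XiA_mul -mulmxA mulmxV ?mulmx1 ?mxvecK //; exact: XiA_unit.
Qed.

Lemma OmegaL a P1 P2 : Omega (a *: P1 + P2) = a *: Omega P1 + Omega P2.
Proof. by rewrite /Omega linearD linearZ /= mulmxDl -scalemxAl linearD linearZ. Qed.

Lemma Omega_mod g Phi : Omega (lmx H g *m Phi) = Omega Phi *m regmx H g.
Proof. by rewrite -{1}[Phi]XiOmega Xi_mod OmegaXi. Qed.

Definition rhoC (Phi : 'M[F]_n) : 'rV[F]_n := hone H *m Omega Phi.

Lemma rhoC_mod g Phi : rhoC (lmx H g *m Phi) = rhoC Phi *m regmx H g.
Proof. by rewrite /rhoC Omega_mod mulmxA. Qed.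

Lemma rhoCL a P1 P2 : rhoC (a *: P1 + P2) = a *: rhoC P1 + rhoC P2.
Proof. by rewrite /rhoC OmegaL mulmxDr scalemxAr. Qed.

Lemma rhoC1 : rhoC 1%:M = hone H.
Proof.
rewrite /rhoC -Xi_one OmegaXi mulmxA [hone H *m _]mx11_scalar -epsE eps1 //.
by rewrite mul1mx.
Qed.

End Omega.

Section Gen.
Variables (F : fieldType) (n : nat) (H : hopf_data F n).
Local Notation e := (@bvec F n).
Local Notation mu := (mulH H).

Definition is_mod (M : hmod F n) := forall g h, act M (mu g h) = act M g *m act M h.

Lemma act_bvec (M : hmod F n) i : act M (e i) = mrho M i.
Proof.
rewrite /act (eq_bigr (fun k => (i == k)%:R *: mrho M k)) ?sum_kronZ // => k _.
by rewrite bvecE.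
Qed.

Lemma actL (M : hmod F n) a u v : act M (a *: u + v) = a *: act M u + act M v.
Proof.
rewrite /act scaler_sumr -big_split; apply: eq_bigr => i _.
by rewrite !mxE scalerDl scalerA.
Qed.

Lemma act0 (M : hmod F n) : act M 0 = 0.
Proof. by rewrite /act big1 // => i _; rewrite mxE scale0r. Qed.

Lemma act_expand (M : hmod F n) u : act M u = \sum_i u 0 i *: act M (e i).
Proof. by under [RHS]eq_bigr => i _ do rewrite act_bvec. Qed.

Lemma faithful_ann (M : hmod F n) h : faithful M -> in_ann M h = (h == 0).
Proof.
move=> fM; apply/idP/idP => [/fM ->|/eqP ->] //.
by rewrite /in_ann act0.
Qed.

Lemma trace_faithful (M : hmod F n) : is_hopf H -> in_trace H M (hone H) -> faithful M.
Proof.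
move=> hH [k [fs [ms [hom E]]]] h /eqP Mh.
rewrite -(unitl hH h) mu_regmx E mulmx_suml big1 // => i _.
by rewrite -mulmxA -hom Mh mul0mx mulmx0.
Qed.

Lemma trace_all (M : hmod F n) : is_hopf H -> in_trace H M (hone H) -> forall h, in_trace H M h.
Proof.
move=> hH [k [fs [ms [hom E]]]] h.
exists k, fs, (fun i => ms i *m act M h); split => //.
rewrite -[in LHS](unitl hH h) mu_regmx E mulmx_suml; apply: eq_bigr => i _.
by rewrite -!mulmxA hom.
Qed.

Section Generator.
Variable M : hmod F n.
Hypotheses (hH : is_hopf H) (modM : is_mod M) (fM : faithful M).
Local Notation d := (mdim M).

Definition Pmx : 'M[F]_(n, d * d) := \matrix_(j < n) mxvec (act M (e j)).

Lemma Pmx_mul y : y *m Pmx = mxvec (act M y).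
Proof.
rewrite mulmx_sum_row [in RHS]act_expand linear_sum; apply: eq_bigr => j _.
by rewrite rowK linearZ.
Qed.

Lemma Pmx_free : row_free Pmx.
Proof.
rewrite -kermx_eq0; apply/eqP/row_matrixP => r; rewrite row0.
set w := row r (kermx Pmx).
have : w *m Pmx = 0 by rewrite /w -row_mul mulmx_ker row0.
rewrite Pmx_mul -(linear0 (@mxvec F d d)) => /(can_inj mxvecK) Mw.
by apply: fM; rewrite /in_ann Mw.
Qed.

Lemma Bex : exists B : 'M[F]_(d * d, n), Pmx *m B == 1%:M.
Proof. by case/row_freeP: Pmx_free => B HB; exists B; rewrite HB. Qed.
Definition Bmx : 'M[F]_(d * d, n) := xchoose Bex.
Lemma Bmx_inv : Pmx *m Bmx = 1%:M.
Proof. exact/eqP/(xchooseP Bex). Qed.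

Definition Bi (i : 'I_d) : 'M[F]_(d, n) := \matrix_(j < d) row (mxvec_index i j) Bmx.

Lemma mxvecB (X : 'M[F]_d) : mxvec X *m Bmx = \sum_i row i X *m Bi i.
Proof.
rewrite {1}(matrix_sum_delta X) linear_sum mulmx_suml; apply: eq_bigr => i _.
rewrite linear_sum mulmx_suml mulmx_sum_row; apply: eq_bigr => j _.
by rewrite linearZ /= mxvec_delta -scalemxAl -rowE rowK mxE.
Qed.

Definition Phi (i : 'I_d) (m : 'rV[F]_d) : 'M[F]_n :=
  \matrix_(y < n) (m *m act M (e y) *m Bi i).

Lemma PhiL i a m1 m2 : Phi i (a *: m1 + m2) = a *: Phi i m1 + Phi i m2.
Proof.
apply/row_matrixP => y; rewrite linearD linearZ /= !rowK.
by rewrite !mulmxDl -!scalemxAl.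
Qed.

Lemma Phi_mod i g m : lmx H g *m Phi i m = Phi i (m *m act M g).
Proof.
apply/row_matrixP => y; rewrite row_mul !rowK mulmx_sum_row.
rewrite -(mulmxA m) -modM act_expand !mulmx_sumr mulmx_suml; apply: eq_bigr => z _.
by rewrite rowK -scalemxAr -scalemxAl.
Qed.

Lemma Phi_sum : \sum_i Phi i (delta_mx 0 i) = 1%:M.
Proof.
apply/row_matrixP => y; rewrite row1 linear_sum /=.
under eq_bigr => i _ do rewrite rowK -rowE.
by rewrite -mxvecB -Pmx_mul -mulmxA Bmx_inv mulmx1.
Qed.

Lemma rhoC_sum I r (P : pred I) (f : I -> 'M[F]_n) :
  rhoC H (\sum_(i <- r | P i) f i) = \sum_(i <- r | P i) rhoC H (f i).
Proof.
have R0 : rhoC H 0 = 0 by rewrite /rhoC /Omega !linear0 mul0mx linear0 mulmx0.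
apply: (big_morph _ _ R0) => x y.
by have := rhoCL H 1 x y; rewrite !scale1r.
Qed.

Definition fmx i : 'M[F]_(d, n) := \matrix_(j < d) rhoC H (Phi i (delta_mx 0 j)).

Lemma fmx_mul i m : m *m fmx i = rhoC H (Phi i m).
Proof.
rewrite /fmx; have := @lin_matrix F d n (fun m => rhoC H (Phi i m)); apply.
by move=> a u v; rewrite PhiL rhoCL.
Qed.

Lemma fmx_hom i : is_hom H (fmx i).
Proof.
move=> h; apply/row_matrixP => j; rewrite !row_mul fmx_mul rowK.
by rewrite -rhoC_mod // Phi_mod -rowE.
Qed.

Lemma gen h : in_trace H M h.
Proof.
apply: trace_all => //; exists d, fmx, (fun i => delta_mx 0 i); split.
  exact: fmx_hom.
under eq_bigr => i _ do rewrite fmx_mul.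
by rewrite -rhoC_sum Phi_sum rhoC1.
Qed.

End Generator.
End Gen.

Section Fact.
Variables (F : fieldType) (n : nat) (U : 'M[F]_n).

Lemma val_factE m W : @val_fact F n U m W = W *m @val_fact F n U _ 1%:M.
Proof. by rewrite /val_fact mul1mx. Qed.

Lemma in_factE m W : @in_fact F n U m W = W *m in_fact U 1%:M.
Proof. by rewrite /in_fact mul1mx. Qed.

Lemma val_factK m : cancel (@val_fact F n U m) (@in_fact F n U m).
Proof.
move=> W /=; rewrite /in_fact /=; set Uc := cokermx U.
apply: (row_free_inj (row_base_free Uc)); rewrite -mulmxA mulmx_base.
rewrite /val_fact /= 2!mulmxA -/Uc mulmxK ?row_ebase_unit //.
have /submxP[u ->]: (row_base Uc <= Uc)%MS by rewrite eq_row_base.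
by rewrite -!mulmxA copid_mx_id ?rank_leq_row.
Qed.

Lemma in_fact_eq0 m (W : 'M_(m, n)) : (in_fact U W == 0) = (W <= U)%MS.
Proof.
rewrite submxE -!mxrank_eq0 -{2}[_ U]mulmx_base mulmxA.
by rewrite (mxrankMfree _ (row_base_free _)).
Qed.

Lemma in_factD m (W1 W2 : 'M_(m, n)) : in_fact U (W1 - W2) = in_fact U W1 - in_fact U W2.
Proof. by rewrite /in_fact mulmxBl. Qed.

Lemma fact_diff m (W : 'M_(m, n)) : (W - val_fact (I:=U) (in_fact U W) <= U)%MS.
Proof. by rewrite -in_fact_eq0 in_factD val_factK subrr. Qed.

End Fact.

Section Tens.
Variable F : fieldType.
Lemma tensZl m1 n1 m2 n2 c (A : 'M[F]_(m1,n1)) (B : 'M[F]_(m2,n2)) :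
  (c *: A) *t B = c *: (A *t B).
Proof. by apply/matrixP => i j; rewrite !mxE mulrA. Qed.
Lemma tensZr m1 n1 m2 n2 c (A : 'M[F]_(m1,n1)) (B : 'M[F]_(m2,n2)) :
  A *t (c *: B) = c *: (A *t B).
Proof. by apply/matrixP => i j; rewrite !mxE mulrCA. Qed.
Lemma tens_suml m1 n1 m2 n2 I r (P : pred I) (A : I -> 'M[F]_(m1,n1)) (B : 'M[F]_(m2,n2)) :
  (\sum_(i <- r | P i) A i) *t B = \sum_(i <- r | P i) (A i *t B).
Proof.
apply/matrixP => x y; rewrite mxE !summxE mulr_suml.
by apply: eq_bigr => i _; rewrite mxE.
Qed.
Lemma tens_sumr m1 n1 m2 n2 I r (P : pred I) (A : 'M[F]_(m1,n1)) (B : I -> 'M[F]_(m2,n2)) :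
  A *t (\sum_(i <- r | P i) B i) = \sum_(i <- r | P i) (A *t B i).
Proof.
apply/matrixP => x y; rewrite mxE !summxE mulr_sumr.
by apply: eq_bigr => i _; rewrite mxE.
Qed.
End Tens.

Section Mods.
Variables (F : fieldType) (n : nat) (H : hopf_data F n).
Hypothesis hH : is_hopf H.
Local Notation e := (@bvec F n).
Local Notation mu := (mulH H).

Lemma act_tens (M N : hmod F n) h :
  act (tensmod H M N) h = sw H h (fun a b => act M (e a) *t act N (e b)).
Proof.
rewrite act_expand sw_expand; apply: eq_bigr => i _; congr (_ *: _).
by rewrite act_bvec sw_bvec /=; apply: eq_bigr => a _; apply: eq_bigr => b _; rewrite !act_bvec.
Qed.

Lemma bl_tens (M N : hmod F n) x w :
  bl (fun s t => act M (e s) *t act N (e t)) x w = act M x *t act N w.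
Proof.
rewrite (act_expand M x) (act_expand N w) tens_suml; apply: eq_bigr => s _.
rewrite tensZl tens_sumr scaler_sumr; apply: eq_bigr => t _.
by rewrite tensZr scalerA.
Qed.

Lemma mod_tens (M N : hmod F n) : is_mod H M -> is_mod H N -> is_mod H (tensmod H M N).
Proof.
move=> mM mN g h; rewrite !act_tens sw_mul // sw_mulmxr; apply: eq_sw => a b.
rewrite sw_mulmxl; apply: eq_sw => c d.
by rewrite bl_tens tensmx_mul -(mM (e a) (e c)) -(mN (e b) (e d)) !mu_bvec.
Qed.

Lemma regmx_expand h : regmx H h = \sum_i h 0 i *: regmx H (e i).
Proof.
apply/row_matrixP => j; rewrite rowK linear_sum /= mu_expr.
by apply: eq_bigr => i _; rewrite linearZ /= rowK.
Qed.

Lemma regmxM g h : regmx H (mu g h) = regmx H g *m regmx H h.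
Proof. by apply/row_matrixP => j; rewrite row_mul !rowK -assoc // mu_regmx. Qed.

Lemma act_fact (I : 'M[F]_n) h :
  act (factmod H I) h = @val_fact F n I _ 1%:M *m regmx H h *m in_fact I 1%:M.
Proof.
rewrite /act /= (regmx_expand h) mulmx_sumr mulmx_suml; apply: eq_bigr => i _.
by rewrite [in LHS]in_factE scalemxAl scalemxAr.
Qed.

Lemma mod_fact (I : 'M[F]_n) : (forall h, (I *m regmx H h <= I)%MS) -> is_mod H (factmod H I).
Proof.
move=> Iid g h; rewrite !act_fact regmxM.
set V := @val_fact F n I _ 1%:M; set C := in_fact I 1%:M.
set X := V *m regmx H g.
have -> : V *m regmx H g *m C *m (V *m regmx H h *m C) =
          val_fact (I:=I) (in_fact I X) *m regmx H h *m C.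
  by rewrite val_factE in_factE !mulmxA.
rewrite mulmxA -/X; apply/eqP; rewrite -subr_eq0 -mulmxBl -mulmxBl -in_factE.
rewrite in_fact_eq0 (submx_trans _ (Iid h)) // submxMr //.
exact: fact_diff.
Qed.

End Mods.

Section Q.
Variables (F : fieldType) (n : nat) (H : hopf_data F n) (R : 'M[F]_n).
Hypothesis hH : is_hopf H.
Local Notation e := (@bvec F n).
Local Notation mu := (mulH H).
Local Notation I := (RplusH H R).
Local Notation Q := (Qmod H R).

Lemma regmx_eps h : regmx H h *m epscol H = epsH H h *: epscol H.
Proof.
apply/matrixP => i j; rewrite [j]ord1 !mxE.
under eq_bigr => k _ do rewrite !mxE.
transitivity (epsH H (mu (e i) h)); first by [].
by rewrite epsM // eps_bvec mulrC.
Qed.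

Lemma Rplus_eps : Rplus H R *m epscol H = 0.
Proof. by apply/sub_kermxP; exact: capmxSr. Qed.

Lemma I_eps : I *m epscol H = 0.
Proof.
apply/sub_kermxP/sumsmx_subP => j _; apply/sub_kermxP.
by rewrite -mulmxA regmx_eps -scalemxAr Rplus_eps scaler0.
Qed.

Lemma I_ideal h : (I *m regmx H h <= I)%MS.
Proof.
rewrite sumsmxMr; apply/sumsmx_subP => j _.
rewrite -mulmxA -regmxM // regmx_expand mulmx_sumr; apply: summx_sub => l _.
rewrite -scalemxAr; apply: scalemx_sub.
exact: (sumsmx_sup l).
Qed.

Lemma valin_eps m (X : 'M[F]_(m, n)) : val_fact (I:=I) (in_fact I X) *m epscol H = X *m epscol H.
Proof.
apply/eqP; rewrite eq_sym -subr_eq0 -mulmxBl; apply/eqP/sub_kermxP.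
apply: submx_trans (fact_diff I X) _.
by apply/sub_kermxP; exact: I_eps.
Qed.

Definition eQ := @val_fact F n I _ 1%:M *m epscol H.

Lemma actQ_eps h : act Q h *m eQ = epsH H h *: eQ.
Proof.
rewrite act_fact /eQ mulmxA -in_factE -val_factE valin_eps.
by rewrite -mulmxA regmx_eps -scalemxAr.
Qed.

Lemma q0_eps : in_fact I (hone H) *m eQ = 1%:M.
Proof.
rewrite /eQ mulmxA -val_factE valin_eps [LHS]mx11_scalar -epsE eps1 //.
Qed.

Lemma faithful_tensQ (M : hmod F n) : faithful M -> faithful (tensmod H M Q).
Proof.
move=> fM h /eqP T0; apply: fM; apply/eqP.
suff K : forall x : 'rV[F]_(mdim M), x *m act M h = 0.
  by apply/row_matrixP => i; rewrite row0 rowE K.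
move=> x.
have : (x *t in_fact I (hone H)) *m act (tensmod H M Q) h *m (1%:M *t eQ) = 0.
  by rewrite T0 mulmx0 mul0mx.
rewrite act_tens sw_mulmxl sw_mulmxr.
under eq_sw => a b do rewrite !tensmx_mul mulmx1 -mulmxA actQ_eps eps_bvec -scalemxAr q0_eps tensZr.
rewrite sw_counitR // => E0.
have E : (x *m act M h) *t (1%:M : 'M[F]_1) = 0.
  rewrite act_expand mulmx_sumr tens_suml -[RHS]E0; apply: eq_bigr => a _.
  by rewrite -scalemxAr tensZl.
apply/rowP => j.
have := congr1 (fun A : 'M[F]_(1 * 1, mdim M * 1) =>
  A (mxtens_index ((0 : 'I_1), (0 : 'I_1))) (mxtens_index (j, (0 : 'I_1)))) E.
by rewrite /= tensmxE !mxE eqxx mulr1.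
Qed.

End Q.

Lemma min_exists (P : nat -> Prop) :
  (exists m, P m) -> exists m, P m /\ forall k, P k -> (m <= k)%N.
Proof.
move=> [m Pm]; elim: m {-2}m (leqnn m) Pm => [|N IH] m lem Pm.
  exists m; split => // k _; move: lem; rewrite leqn0 => /eqP ->.
  exact: leq0n.
case: (classic (exists k, P k /\ (k < m)%N)) => [[k [Pk ltk]]|nk].
  by apply: (IH k) => //; rewrite -ltnS (leq_trans ltk lem).
exists m; split => // k Pk; rewrite leqNgt; apply/negP => ltk.
by apply: nk; exists k.
Qed.

Section Main.
Variables (F : fieldType) (n : nat) (H : hopf_data F n).
Hypothesis hH : is_hopf H.

Lemma tpowS (M : hmod F n) m : (0 < m)%N -> tpow H M m.+1 = tensmod H (tpow H M m) M.
Proof. by case: m. Qed.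

Lemma mod_tpow (M : hmod F n) : is_mod H M -> forall m, (0 < m)%N -> is_mod H (tpow H M m).
Proof.
move=> mM; elim=> [//|m IH] _.
case: m IH => [//|m] IH.
by rewrite tpowS //; apply: mod_tens => //; apply: IH.
Qed.

Variable R : 'M[F]_n.
Local Notation Q := (Qmod H R).

Lemma faithful_up m k : (0 < m)%N -> faithful (tpow H Q m) -> (m <= k)%N ->
  faithful (tpow H Q k).
Proof.
move=> m0 fm; elim: k => [|k IH]; first by rewrite leqn0 => /eqP E; move: m0; rewrite E.
rewrite leq_eqVlt => /orP [/eqP <- //|]; rewrite ltnS => mk.
have k0 : (0 < k)%N by apply: leq_trans mk.
by rewrite tpowS //; apply: faithful_tensQ => //; apply: IH.
Qed.

Lemma modQ : is_mod H Q.
Proof. by apply: mod_fact => // h; apply: I_ideal. Qed.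

End Main.

Unset Implicit Arguments.

Theorem mainTheorem18 (F : fieldType) (n : nat) (H : hopf_data F n) (R : 'M[F]_n) :
  is_hopf H -> is_hopf_subalg H R ->
  cond_faithful H (Qmod H R) ->
  exists l, is_L H (Qmod H R) l /\ is_ell H (Qmod H R) l.
Proof.
move=> hH _ [m0 [m0pos fm0]].
set Q := Qmod H R.
have modT m : (0 < m)%N -> is_mod H (tpow H Q m).
  by apply: mod_tpow => //; apply: modQ.
have up k : (m0 <= k)%N -> faithful (tpow H Q k).
  by apply: faithful_up.
have [l [[lpos fl] lmin]] := min_exists
   (ex_intro (fun m => (0 < m)%N /\ faithful (tpow H Q m)) m0 (conj m0pos fm0)).
have upl k : (l <= k)%N -> faithful (tpow H Q k) by apply: faithful_up.
have genk k : (l <= k)%N -> forall h, in_trace H (tpow H Q k) h.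
  move=> lk h; apply: gen => //; last exact: upl.
  by apply: modT; apply: leq_trans lk.
exists l; split; split => //.
- by move=> m lm h; split => _; apply: genk.
- move=> l' l'pos st; apply: lmin; split => //.
  apply: (@trace_faithful _ _ H) => //.
  apply: (proj2 (st (maxn l' m0) (leq_maxl _ _) (hone H))).
  apply: gen => //; first by apply: modT; apply: leq_trans l'pos (leq_maxl _ _).
  exact/up/leq_maxr.
- move=> m lm h; rewrite !faithful_ann //; exact: upl.
- move=> l' l'pos st; apply: lmin; split => // h Hh.
  have := st (maxn l' m0) (leq_maxl _ _) h.
  rewrite Hh faithful_ann; last exact/up/leq_maxr.
  by move=> /esym /eqP.
Qed.
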